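(* Let $G$ be a connected finite simple graph with $n$ vertices and diameter at most $2$. Then for every $R$-weighted complete graph $X$ with $n$ vertices, $|s(\{I(G)\}*\{X\})|=1$ if and only if $|s(\{\rho(G)\}*\{X\})|=1$; that is, $I(G)^{\perp}=\rho(G)^{\perp}$.
   Context: Fix a commutative ring $R$. An $R$-weighted complete graph $K$ is a finite vertex set with a weight $v_K(e)\in R$ on every 2-subset $e$. For such $H,G'$ with equal vertex counts and a bijection $f:V(H)\to V(G')$, $H*_fG'$ has vertex set $V(H)$ and weights $v_H(\{x,y\})v_{G'}(\{f(x),f(y)\})$; $H*G'=\{H*_fG': f \text{ bijection}\}$. $s(K)=\sum_e v_K(e)$, $s(\mathscr K)=\{s(K):K\in\mathscr K\}$. For a weighted complete graph $H$, $H^{\perp}$ is the class of $R$-weighted complete graphs $X$ with $|V(X)|=|V(H)|$ and $|s(H*X)|=1$. For a simple graph $G$, $I(G)$ has weight $1$ on edges and $0$ on non-edges; for connected $G$, $\rho(G)$ has weight $\rho_G(x,y)$ (graph distance) on $\{x,y\}$. *)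

(* Defs.v *)
From HB Require Import structures.
From mathcomp Require Import all_boot all_order all_algebra.
Set Implicit Arguments. Unset Strict Implicit. Unset Printing Implicit Defensive.
Import GRing.Theory.
Local Open Scope ring_scope.

(* A simple graph on the finite vertex type T is a symmetric irreflexive
   relation e : rel T.  An R-weighted complete graph on a finite vertex type
   V is a weight function w : {set V} -> R, of which only the values on
   2-subsets matter. *)

Fixpoint reach_le (T : finType) (e : rel T) (k : nat) (x y : T) : bool :=
  match k with
  | 0 => x == y
  | k'.+1 => reach_le e k' x y || [exists z, reach_le e k' x z && e z y]
  end.

(* graph distance (meaningful for connected graphs: the least k with a walk
   of length k; any shortest walk has length < #|T|) *)
Definition gdist (T : finType) (e : rel T) (x y : T) : nat :=
  find (fun k => reach_le e k x y) (iota 0 #|T|).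

(* the weight on a 2-subset {x,y} induced by a symmetric function d *)
Definition of_pairs (R : nmodType) (T : finType) (d : T -> T -> R)
    (A : {set T}) : R :=
  match [pick x in A] with
  | Some x => match [pick y in A :\ x] with Some y => d x y | None => 0 end
  | None => 0
  end.

Definition IG (R : comPzRingType) (T : finType) (e : rel T) : {set T} -> R :=
  of_pairs (fun x y => if e x y then (1 : R) else 0).

Definition rhoG (R : comPzRingType) (T : finType) (e : rel T) : {set T} -> R :=
  of_pairs (fun x y => ((gdist e x y)%:R : R)).

Definition s_prod (R : comPzRingType) (T V : finType) (h : {set T} -> R)
    (X : {set V} -> R) (f : T -> V) : R :=
  \sum_(A : {set T} | #|A| == 2%N) h A * X (f @: A).

(* |s({H} * {X})| = 1 : the set { s(H *_f X) : f bijection } is a singleton *)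
Definition s_singleton (R : comPzRingType) (T V : finType) (h : {set T} -> R)
    (X : {set V} -> R) : Prop :=
  exists c : R, forall r : R,
    (exists f : T -> V, bijective f /\ r = s_prod h X f) <-> r = c.

(* Main.v *)
Require Import Defs.
From HB Require Import structures.
From mathcomp Require Import all_boot all_order all_algebra.
Import GRing.Theory.

Lemma imset_can_bij (T V : finType) (f : T -> V) (g : V -> T) :
  cancel f g -> cancel g f ->
  bijective (fun A : {set T} => f @: A).
Proof.
move=> fK gK; exists (fun B : {set V} => g @: B) => A.
  by rewrite -imset_comp (eq_imset _ fK) imset_id.
by rewrite -imset_comp (eq_imset _ gK) imset_id.
Qed.

Lemma sum_indep (R : comPzRingType) (T V : finType) (X : {set V} -> R)
  (f : T -> V) : bijective f ->
  (\sum_(A : {set T} | #|A| == 2%N) X (f @: A) =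
   \sum_(B : {set V} | #|B| == 2%N) X B)%R.
Proof.
case=> g fK gK.
rewrite (reindex (fun A : {set T} => f @: A)) /=.
  apply: eq_bigl => A; by rewrite card_imset //; apply: can_inj fK.
by apply: onW_bij; apply: imset_can_bij fK gK.
Qed.

Lemma of_pairs_map (R1 R2 : nmodType) (T : finType) (d1 : T -> T -> R1)
  (d2 : T -> T -> R2) (g : R2 -> R1) :
  (forall x y, x != y -> d1 x y = g (d2 x y)) ->
  forall A : {set T}, #|A| = 2%N -> of_pairs d1 A = g (of_pairs d2 A).
Proof.
move=> H A hA; rewrite /of_pairs.
case: pickP => [x xA|A0]; last first.
  by move: hA; rewrite (eq_card0 A0).
case: pickP => [y|A1]; last first.
  by move: hA; rewrite (cardsD1 x A) xA (eq_card0 A1).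
rewrite !inE => /andP[yx _]; apply: H; by rewrite eq_sym.
Qed.

Lemma gdist_val (T : finType) (e : rel T) x y :
  x != y -> (gdist e x y <= 2)%N ->
  gdist e x y = (if e x y then 1 else 2)%N.
Proof.
move=> xy hle.
have r0 : reach_le e 0 x y = false by rewrite /= (negbTE xy).
have r1 : reach_le e 1 x y = e x y.
  rewrite /= (negbTE xy) /=; apply/existsP/idP => [[z /andP[/eqP-> //]]|exy].
  by exists x; rewrite eqxx.
have cT : (2 <= #|T|)%N.
  have := subset_leq_card (subsetT [set x; y]).
  by rewrite cards2 xy cardsT.
rewrite /gdist in hle *.
set s := iota 0 #|T| in hle *.
have ss : size s = #|T| by rewrite size_iota.
set p := (fun k => reach_le e k x y).
have n0 : find p s != 0%N.
  apply/eqP=> h0.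
  have hs : has p s by rewrite has_find h0 ss; apply: leq_trans cT.
  have := nth_find 0%N hs; rewrite h0 nth_iota ?ss; last by apply: leq_trans cT.
  by rewrite /p r0.
case exy: (e x y).
  have : (find p s <= 1)%N.
    rewrite leqNgt; apply/negP=> h1.
    have := before_find 0%N h1; rewrite nth_iota //= /p r1 exy //.
  by move: n0; case: (find p s) => [|[|]].
have n1 : find p s != 1%N.
  apply/eqP=> h1.
  have hs : has p s by rewrite has_find h1 ss.
  by have := nth_find 0%N hs; rewrite h1 nth_iota ?ss // /p r1 exy.
by move: n0 n1 hle; case: (find p s) => [|[|[|]]].
Qed.

Lemma sing_transfer (R : comPzRingType) (T V : finType) (h1 h2 : {set T} -> R)
  (X : {set V} -> R) (K : R) :
  (forall f : T -> V, bijective f -> s_prod h2 X f = K - s_prod h1 X f)%R ->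
  s_singleton h1 X -> s_singleton h2 X.
Proof.
move=> H [c Hc]; exists (K - c)%R => r; split.
  move=> [f [bf ->]]; rewrite H //; congr (_ - _)%R; apply/Hc; by exists f.
move=> ->.
have [f [bf ->]] : exists f : T -> V, bijective f /\ c = s_prod h1 X f by apply/Hc.
by exists f; split => //; rewrite H.
Qed.

Theorem mainTheorem18 (R : comPzRingType) (T : finType) (e : rel T)
    (e_sym : symmetric e) (e_irr : irreflexive e)
    (e_conn : forall x y : T, connect e x y)
    (e_diam : forall x y : T, (gdist e x y <= 2)%N)
    (V : finType) (X : {set V} -> R) (hV : #|V| = #|T|) :
  s_singleton (IG R e) X <-> s_singleton (rhoG R e) X.
Proof.
pose K := (2%:R * \sum_(B : {set V} | #|B| == 2%N) X B)%R.
have rel : forall A : {set T}, #|A| = 2%N -> rhoG R e A = (2%:R - IG R e A)%R.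
  move=> A hA; rewrite /rhoG /IG.
  apply: (@of_pairs_map R R T _ _ (fun t : R => 2%:R - t)%R) hA => x y xy.
  rewrite (@gdist_val T e x y xy (e_diam x y)); case: (e x y) => /=.
    by rewrite [in RHS]mulrS addrK.
  by rewrite subr0.
have key : forall f : T -> V, bijective f ->
    s_prod (rhoG R e) X f = (K - s_prod (IG R e) X f)%R.
  move=> f bf; rewrite /s_prod /K -(@sum_indep R T V X f bf) mulr_sumr -sumrB.
  apply: eq_bigr => A /eqP hA; rewrite rel // mulrBl //.
split; first by apply: (@sing_transfer R T V _ _ X K) => f bf; rewrite key.
apply: (@sing_transfer R T V _ _ X K) => f bf; rewrite key //.
by rewrite opprB addrCA subrr addr0.
Qed.
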